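(* Let $V$ be a nonlocal vertex algebra and let $F=\{F_n\}_{n\in\mathbb{Z}}$ be an increasing filtration of $V$ with $\mathbf{1}\in F_0$ such that $a_mF_n\subset F_{k+n-m-1}$ for all $a\in F_k$ and $k,m,n\in\mathbb{Z}$. Then the graded space $\mathrm{Gr}_F(V)=\coprod_{n\in\mathbb{Z}}F_n/F_{n-1}$ is a $\mathbb{Z}$-graded nonlocal vertex algebra with vacuum vector $\mathbf{1}+F_{-1}$ and with $(a+F_{m-1})_k(b+F_{n-1})=a_kb+F_{m+n-k-2}$ for $a\in F_m$, $b\in F_n$, $m,n,k\in\mathbb{Z}$. Furthermore, if $F$ is the filtration associated with a generating subset $T$ of $V$, then $\{u+F_0\mid u\in T\}\subset F_1/F_0$ is a generating subset of $\mathrm{Gr}_F(V)$.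
   Context: A nonlocal vertex algebra is a complex vector space $V$ with vector $\mathbf{1}$ and linear $Y:V\to\mathrm{Hom}(V,V((x)))$, $Y(v,x)=\sum_nv_nx^{-n-1}$, such that $Y(\mathbf{1},x)v=v$, $Y(v,x)\mathbf{1}\in V[[x]]$ with constant term $v$, and for $u,v,w$ there is $l\ge0$ with $(x_0+x_2)^lY(u,x_0+x_2)Y(v,x_2)w=(x_0+x_2)^lY(Y(u,x_0)v,x_2)w$. A generating subset $T$ is one such that the smallest nonlocal vertex subalgebra containing $T$ is $V$. A $\mathbb{Z}$-graded nonlocal vertex algebra is a nonlocal vertex algebra $U=\coprod_nU_{(n)}$ with $\mathbf{1}\in U_{(0)}$ and $u_kv\in U_{(m+n-k-1)}$ for $u\in U_{(m)},v\in U_{(n)}$. An increasing filtration is a family of subspaces with $F_n\subset F_{n+1}$. The filtration associated with a generating subset $T$: $F_n$ is the span of $u^{(1)}_{m_1}\cdots u^{(r)}_{m_r}\mathbf{1}$ with $u^{(i)}\in T$, $m_i\in\mathbb{Z}$, $m_1+\cdots+m_r\ge-n$, where $r\ge1$ if $n<0$ and $r\ge0$ if $n\ge0$ (this filtration satisfies the hypotheses above). *)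

(* Defs.v *)
(* Nonlocal vertex algebras over an arbitrary field K
   (the paper works over C). *)
From HB Require Import structures.
From mathcomp Require Import all_boot all_order all_algebra.
Set Implicit Arguments. Unset Strict Implicit. Unset Printing Implicit Defensive.
Import Order.TTheory GRing.Theory Num.Theory.
Local Open Scope ring_scope.

(* Generalized binomial coefficient  binom(z, j)  for z : int, j : nat:
   binom(n, j) = 'C(n, j) and binom(-(n+1), j) = (-1)^j 'C(n+j, j). *)
Definition binz (z : int) (j : nat) : int :=
  match z with
  | Posz n => ('C(n, j))%:Z
  | Negz n => (-1) ^+ j * ('C(n + j, j))%:Z
  end.

Definition subspace (K : fieldType) (V : lmodType K) (S : V -> Prop) : Prop :=
  S 0 /\ forall (a : K) (x y : V), S x -> S y -> S (a *: x + y).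

Definition span (K : fieldType) (V : lmodType K) (P : V -> Prop) (x : V) : Prop :=
  forall S : V -> Prop, subspace S -> (forall y, P y -> S y) -> S x.

(* Weak associativity, coefficientwise.  md u n v is u_n v, i.e.
   Y(u,x) v = sum_n (md u n v) x^(-n-1).  The identity
   (x0+x2)^l Y(u,x0+x2)Y(v,x2)w = (x0+x2)^l Y(Y(u,x0)v,x2)w
   is compared at the coefficient of x0^a x2^b.  On the left,
   (x0+x2)^l Y(u,x0+x2) = sum_n u_n (x0+x2)^(l-n-1) (expanded in nonnegative
   powers of x2); writing n = l-1-a-t, the coefficient is the sum over t >= 0
   of binom(a+t,t) u_(l-1-a-t) v_(t-1-b) w, which is a finite sum because
   v_m w = 0 for m large: it is computed up to any T beyond which
   v_(t-1-b) w vanishes. *)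
Definition weak_assoc (K : fieldType) (V : lmodType K)
    (md : V -> int -> V -> V) : Prop :=
  forall u v w : V, exists l : nat, forall (a b : int) (T : nat),
    (forall t : nat, (T <= t)%N -> md v (t%:Z - 1 - b) w = 0) ->
    \sum_(0 <= t < T)
        (md u (l%:Z - 1 - a - t%:Z) (md v (t%:Z - 1 - b) w) *~ binz (a + t%:Z) t)
    = \sum_(0 <= i < l.+1)
        (md (md u (l%:Z - i%:Z - 1 - a) v) (i%:Z - 1 - b) w *+ 'C(l, i)).

Record is_nva (K : fieldType) (V : lmodType K) (vac : V)
    (md : V -> int -> V -> V) : Prop := {
  nva_linl : forall (c : K) (u u' : V) (n : int) (v : V),
      md (c *: u + u') n v = c *: md u n v + md u' n v;
  nva_linr : forall (c : K) (u : V) (n : int) (v v' : V),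
      md u n (c *: v + v') = c *: md u n v + md u n v';
  nva_trunc : forall u v : V, exists N : int, forall n : int, N <= n -> md u n v = 0;
  nva_vac : forall (v : V) (n : int), md vac n v = (if n == -1 then v else 0);
  nva_create : forall v : V, (forall n : int, 0 <= n -> md v n vac = 0) /\ md v (-1) vac = v;
  nva_assoc : weak_assoc md }.

Definition direct_sum_decomp (K : fieldType) (U : lmodType K)
    (G : int -> U -> Prop) : Prop :=
  [/\ (forall n, subspace (G n)),
      (forall u : U, exists (s : seq int) (f : int -> U),
          (forall n, G n (f n)) /\ u = \sum_(n <- s) f n) &
      (forall (s : seq int) (f : int -> U), uniq s -> (forall n, G n (f n)) ->
          \sum_(n <- s) f n = 0 -> forall n, n \in s -> f n = 0)].

Definition is_Zgraded_nva (K : fieldType) (U : lmodType K) (G : int -> U -> Prop)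
    (vac : U) (md : U -> int -> U -> U) : Prop :=
  [/\ is_nva vac md, direct_sum_decomp G, G 0 vac &
      forall (m n k : int) (u v : U), G m u -> G n v -> G (m + n - k - 1) (md u k v)].

Definition nva_filtration (K : fieldType) (V : lmodType K) (vac : V)
    (md : V -> int -> V -> V) (F : int -> V -> Prop) : Prop :=
  [/\ (forall n, subspace (F n)),
      (forall n x, F n x -> F (n + 1) x),
      F 0 vac &
      forall (k m n : int) (a b : V), F k a -> F n b -> F (k + n - m - 1) (md a m b)].

(* (U, G, pi) realizes Gr_F(V) = coprod_n F_n / F_(n-1):  G n is identified
   with F_n/F_(n-1) via pi n (linear on F_n, onto G n, kernel F_(n-1)), and
   U is the direct sum of the G n.  pi n x is the class x + F_(n-1). *)
Definition is_Gr_realization (K : fieldType) (V U : lmodType K)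
    (F : int -> V -> Prop) (G : int -> U -> Prop) (pi : int -> V -> U) : Prop :=
  [/\ direct_sum_decomp G,
      (forall n (c : K) x y, F n x -> F n y -> pi n (c *: x + y) = c *: pi n x + pi n y),
      (forall n x, F n x -> G n (pi n x)),
      (forall n y, G n y -> exists2 x, F n x & pi n x = y) &
      (forall n x, F n x -> (pi n x = 0 <-> F (n - 1) x))].

Definition subalgebra (K : fieldType) (V : lmodType K) (vac : V)
    (md : V -> int -> V -> V) (S : V -> Prop) : Prop :=
  [/\ subspace S, S vac & forall (u v : V) (n : int), S u -> S v -> S (md u n v)].

Definition generating (K : fieldType) (V : lmodType K) (vac : V)
    (md : V -> int -> V -> V) (T : V -> Prop) : Prop :=
  forall S, subalgebra vac md S -> (forall x, T x -> S x) -> forall x, S x.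

Definition monomial (K : fieldType) (V : lmodType K) (vac : V)
    (md : V -> int -> V -> V) (s : seq (V * int)) : V :=
  foldr (fun p acc => md p.1 p.2 acc) vac s.

Definition assoc_filtration (K : fieldType) (V : lmodType K) (vac : V)
    (md : V -> int -> V -> V) (T : V -> Prop) (n : int) : V -> Prop :=
  span (fun x => exists s : seq (V * int),
          [/\ (forall i : nat, (i < size s)%N -> T (nth (0, 0) s i).1),
              - n <= \sum_(p <- s) p.2,
              (n < 0 -> (0 < size s)%N) &
              x = monomial vac md s]).

(* Main.v *)
Require Import Defs.
From HB Require Import structures.
From mathcomp Require Import all_boot all_order all_algebra.
From mathcomp Require Import zify ring lra.
From Stdlib Require Import ClassicalEpsilon.
Import Order.TTheory GRing.Theory Num.Theory.
Local Open Scope ring_scope.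
Set Implicit Arguments. Unset Strict Implicit. Unset Printing Implicit Defensive.
Lemma binz_pascal (z : int) (j : nat) :
  binz z j.+1 = binz (z - 1) j.+1 + binz (z - 1) j.
Proof.
case: z => [[|n]|n].
- have -> : (Posz 0 - 1 = Negz 0) by [].
  rewrite /= bin0n add0n !binn exprS mulN1r !mulr1 addNr //.
- have -> : (Posz n.+1 - 1 = Posz n) by lia.
  by rewrite /= binS PoszD.
- have -> : (Negz n - 1 = Negz n.+1) by rewrite !NegzE; lia.
  rewrite /= (addSn n j.+1) binS addSnnS PoszD mulrDr exprS mulN1r !mulNr.
  by rewrite -addrA addNr addr0.
Qed.

Lemma binz0 (z : int) : binz z 0 = 1.
Proof. by case: z => n /=; rewrite ?addn0 bin0 ?expr0 ?mul1r. Qed.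

Section WA.
Variable (M : zmodType) (md : M -> int -> M -> M).

Definition condv v w (b : int) (T : nat) :=
  forall t : nat, (T <= t)%N -> md v (t%:Z - 1 - b) w = 0.
Definition LHSd u v w (l : nat) (a b : int) (T : nat) :=
  \sum_(0 <= t < T)
        (md u (l%:Z - 1 - a - t%:Z) (md v (t%:Z - 1 - b) w) *~ binz (a + t%:Z) t).
Definition RHSd u v w (l : nat) (a b : int) :=
  \sum_(0 <= i < l.+1)
        (md (md u (l%:Z - i%:Z - 1 - a) v) (i%:Z - 1 - b) w *+ 'C(l, i)).
Definition WAT u v w l := forall a b T, condv v w b T -> LHSd u v w l a b T = RHSd u v w l a b.


Hypothesis mdu0 : forall u n, md u n 0 = 0.

Lemma LHS_ext u v w l a b T T' : condv v w b T -> (T <= T')%N ->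
  LHSd u v w l a b T' = LHSd u v w l a b T.
Proof.
move=> cT HT; rewrite /LHSd (big_cat_nat (n:=T)) //=.
rewrite [X in _ + X]big_nat_cond [X in _ + X]big1 ?addr0 // => t /andP[/andP[Ht _] _].
by rewrite cT // mdu0 mul0rz.
Qed.

Lemma WAT_S u v w l : WAT u v w l -> WAT u v w l.+1.
Proof.
move=> H a b T cT.
have cT1 : condv v w b T.+1 by move=> t Ht; apply: cT; exact: ltnW.
have cT2 : condv v w (b - 1) T.
  move=> t Ht; rewrite (_ : t%:Z - 1 - (b - 1) = t.+1%:Z - 1 - b); last by lia.
  by apply: cT; exact: leqW.
rewrite -(LHS_ext u l.+1 a cT (leqnSn T)).
have E1 := H (a - 1) b T.+1 cT1.
have E2 := H a (b - 1) T cT2.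
transitivity (LHSd u v w l (a-1) b T.+1 + LHSd u v w l a (b-1) T).
  rewrite /LHSd big_nat_recl // [in RHS]big_nat_recl // -(addrA (_ *~ _)).
  congr (_ + _).
    rewrite !binz0; congr (md u _ _ *~ _); lia.
  rewrite -big_split /=; apply: eq_bigr => i _.
  rewrite binz_pascal mulrzDr; congr (_ + _).
    congr (md u _ _ *~ binz _ _); lia.
  congr (md u _ (md v _ w) *~ binz _ _); lia.
rewrite E1 E2 /RHSd.
rewrite (big_nat_recl l.+1) // [in LHS](big_nat_recl l) //.
under [X in _ = _ + X]eq_bigr => i _ do rewrite binS mulrnDr.
rewrite big_split /= [X in _ = _ + (X + _)](big_nat_recr l) //= (bin_small (ltnSn l)) mulr0n addr0.
rewrite -(addrA (_ *+ _)); congr (_ + (_ + _)).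
- rewrite !bin0; congr (md (md u _ v) _ w *+ _); lia.
- rewrite addr0; apply: eq_bigr => i _; congr (md (md u _ v) _ w *+ _); lia.
- apply: eq_bigr => i _; congr (md (md u _ v) _ w *+ _); lia.
Qed.


Lemma WAT_le u v w l l' : WAT u v w l -> (l <= l')%N -> WAT u v w l'.
Proof.
move=> H; elim: l' => [|l' IH]; first by rewrite leqn0 => /eqP <-.
rewrite leq_eqVlt => /orP[/eqP <- //|]; rewrite ltnS => /IH; exact: WAT_S.
Qed.

Hypothesis md0u : forall v n, md 0 n v = 0.
Hypothesis mdD1 : forall u u' n v, md (u + u') n v = md u n v + md u' n v.
Hypothesis mdD2 : forall u n v v', md u n (v + v') = md u n v + md u n v'.
Hypothesis mdtr : forall u v, exists N : int, forall n, N <= n -> md u n v = 0.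

Lemma cond_exists v w b : exists T, condv v w b T.
Proof.
have [N HN] := mdtr v w.
exists (absz (N + 1 + b)) => t Ht; apply: HN.
move: Ht; lia.
Qed.

Lemma cond_le v w b T T' : condv v w b T -> (T <= T')%N -> condv v w b T'.
Proof. by move=> H HT t Ht; apply: H; exact: leq_trans Ht. Qed.

Lemma WAT_big u v w l :
  (forall a b, exists T0, forall T, (T0 <= T)%N -> condv v w b T ->
      LHSd u v w l a b T = RHSd u v w l a b) -> WAT u v w l.
Proof.
move=> H a b T cT; have [T0 HT0] := H a b.
rewrite -(LHS_ext u l a cT (leq_maxl T T0)); apply: HT0; first exact: leq_maxr.
exact: cond_le cT (leq_maxl _ _).
Qed.

Lemma WAT_addu u1 u2 v w l : WAT u1 v w l -> WAT u2 v w l -> WAT (u1 + u2) v w l.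
Proof.
move=> H1 H2 a b T cT.
have -> : LHSd (u1 + u2) v w l a b T = LHSd u1 v w l a b T + LHSd u2 v w l a b T.
  by rewrite /LHSd -big_split; apply: eq_bigr => i _; rewrite mdD1 mulrzDl.
rewrite H1 // H2 // /RHSd -big_split; apply: eq_bigr => i _.
by rewrite mdD1 mdD1 mulrnDl.
Qed.

Lemma WAT_addv u v1 v2 w l : WAT u v1 w l -> WAT u v2 w l -> WAT u (v1 + v2) w l.
Proof.
move=> H1 H2; apply: WAT_big => a b.
have [T1 c1] := cond_exists v1 w b; have [T2 c2] := cond_exists v2 w b.
exists (maxn T1 T2) => T HT _.
have -> : LHSd u (v1 + v2) w l a b T = LHSd u v1 w l a b T + LHSd u v2 w l a b T.
  by rewrite /LHSd -big_split; apply: eq_bigr => i _; rewrite mdD1 mdD2 mulrzDl.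
rewrite H1; last by apply: cond_le c1 _; apply: leq_trans HT; exact: leq_maxl.
rewrite H2; last by apply: cond_le c2 _; apply: leq_trans HT; exact: leq_maxr.
rewrite /RHSd -big_split; apply: eq_bigr => i _.
by rewrite mdD2 mdD1 mulrnDl.
Qed.

Lemma WAT_addw u v w1 w2 l : WAT u v w1 l -> WAT u v w2 l -> WAT u v (w1 + w2) l.
Proof.
move=> H1 H2; apply: WAT_big => a b.
have [T1 c1] := cond_exists v w1 b; have [T2 c2] := cond_exists v w2 b.
exists (maxn T1 T2) => T HT _.
have -> : LHSd u v (w1 + w2) l a b T = LHSd u v w1 l a b T + LHSd u v w2 l a b T.
  by rewrite /LHSd -big_split; apply: eq_bigr => i _; rewrite mdD2 mdD2 mulrzDl.
rewrite H1; last by apply: cond_le c1 _; apply: leq_trans HT; exact: leq_maxl.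
rewrite H2; last by apply: cond_le c2 _; apply: leq_trans HT; exact: leq_maxr.
rewrite /RHSd -big_split; apply: eq_bigr => i _.
by rewrite mdD2 mulrnDl.
Qed.

Lemma WAT_0u v w l : WAT 0 v w l.
Proof.
move=> a b T _; rewrite /LHSd /RHSd !big1 // => i _; by rewrite ?md0u ?md0u ?mul0rz ?mul0rn.
Qed.
Lemma WAT_0v u w l : WAT u 0 w l.
Proof.
move=> a b T _; rewrite /LHSd /RHSd !big1 // => i _; by rewrite ?md0u ?mdu0 ?md0u ?mul0rz ?mul0rn.
Qed.
Lemma WAT_0w u v l : WAT u v 0 l.
Proof.
move=> a b T _; rewrite /LHSd /RHSd !big1 // => i _; by rewrite ?mdu0 ?mdu0 ?mul0rz ?mul0rn.
Qed.

Definition Good u v w := exists l0, forall l, (l0 <= l)%N -> WAT u v w l.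

Lemma Good_of u v w l : WAT u v w l -> Good u v w.
Proof. by move=> H; exists l => l' Hl; exact: WAT_le H Hl. Qed.

Lemma Good_addu u1 u2 v w : Good u1 v w -> Good u2 v w -> Good (u1 + u2) v w.
Proof.
move=> [l1 H1] [l2 H2]; exists (maxn l1 l2) => l Hl; apply: WAT_addu.
  by apply: H1; apply: leq_trans Hl; exact: leq_maxl.
by apply: H2; apply: leq_trans Hl; exact: leq_maxr.
Qed.
Lemma Good_addv u v1 v2 w : Good u v1 w -> Good u v2 w -> Good u (v1 + v2) w.
Proof.
move=> [l1 H1] [l2 H2]; exists (maxn l1 l2) => l Hl; apply: WAT_addv.
  by apply: H1; apply: leq_trans Hl; exact: leq_maxl.
by apply: H2; apply: leq_trans Hl; exact: leq_maxr.
Qed.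
Lemma Good_addw u v w1 w2 : Good u v w1 -> Good u v w2 -> Good u v (w1 + w2).
Proof.
move=> [l1 H1] [l2 H2]; exists (maxn l1 l2) => l Hl; apply: WAT_addw.
  by apply: H1; apply: leq_trans Hl; exact: leq_maxl.
by apply: H2; apply: leq_trans Hl; exact: leq_maxr.
Qed.
Lemma Good_0u v w : Good 0 v w. Proof. apply: (@Good_of _ _ _ 0); exact: WAT_0u. Qed.
Lemma Good_0v u w : Good u 0 w. Proof. apply: (@Good_of _ _ _ 0); exact: WAT_0v. Qed.
Lemma Good_0w u v : Good u v 0. Proof. apply: (@Good_of _ _ _ 0); exact: WAT_0w. Qed.

End WA.

Lemma grp4 (M : zmodType) (x y w : M) : x = w + ((x - y) + (y - w)).
Proof. by rewrite (addrC (x - y)) addrA (addrC w) subrK addrC subrK. Qed.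

Lemma dbl0 (M : zmodType) (x : M) : x = x + x -> x = 0.
Proof. by move=> h; apply/eqP; rewrite -(inj_eq (addrI x)) addr0 -h. Qed.

Lemma sum_supp (T : eqType) (M : zmodType) (s t : seq T) (g : T -> M) :
  uniq s -> uniq t -> {subset s <= t} -> (forall n, n \notin s -> g n = 0) ->
  \sum_(n <- t) g n = \sum_(n <- s) g n.
Proof.
move=> us ut st g0.
rewrite (bigID (mem s)) /= [X in _ + X]big1 ?addr0; last by move=> n /g0.
rewrite -big_filter; apply: perm_big; apply: uniq_perm; rewrite ?filter_uniq //.
by move=> x; rewrite mem_filter andb_idr //; exact: st.
Qed.

Lemma sum_one (T : eqType) (M : zmodType) (t : seq T) (m : T) (g : T -> M) :
  uniq t -> m \in t -> (forall n, n != m -> g n = 0) -> \sum_(n <- t) g n = g m.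
Proof.
move=> ut mt g0; rewrite (@sum_supp _ _ [:: m]) ?big_seq1 //.
- by move=> x; rewrite inE => /eqP ->.
- by move=> n; rewrite inE; exact: g0.
Qed.

Section Main.
Variables (K : fieldType) (V : lmodType K) (vac : V) (md : V -> int -> V -> V)
  (F : int -> V -> Prop).
Hypothesis HV : is_nva vac md.
Hypothesis HF : nva_filtration vac md F.
Variables (U : lmodType K) (G : int -> U -> Prop) (pi : int -> V -> U).
Hypothesis HU : is_Gr_realization F G pi.

Lemma mdD1 u u' n v : md (u + u') n v = md u n v + md u' n v.
Proof. by have := nva_linl HV 1 u u' n v; rewrite !scale1r. Qed.
Lemma mdD2 u n v v' : md u n (v + v') = md u n v + md u n v'.
Proof. by have := nva_linr HV 1 u n v v'; rewrite !scale1r. Qed.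
Lemma md0u v n : md 0 n v = 0.
Proof. by apply: dbl0; rewrite -mdD1 addr0. Qed.
Lemma mdu0 u n : md u n 0 = 0.
Proof. by apply: dbl0; rewrite -mdD2 addr0. Qed.
Lemma mdZ1 c u n v : md (c *: u) n v = c *: md u n v.
Proof. by have := nva_linl HV c u 0 n v; rewrite !addr0 md0u addr0. Qed.

Lemma mdZ2 c u n v : md u n (c *: v) = c *: md u n v.
Proof. by have := nva_linr HV c u n v 0; rewrite !addr0 mdu0 addr0. Qed.
Lemma mdB1 u u' n v : md (u - u') n v = md u n v - md u' n v.
Proof. by rewrite mdD1 -scaleN1r mdZ1 scaleN1r. Qed.
Lemma mdB2 u n v v' : md u n (v - v') = md u n v - md u n v'.
Proof. by rewrite mdD2 -scaleN1r mdZ2 scaleN1r. Qed.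

Lemma Fsub n : subspace (F n). Proof. by case: HF. Qed.
Lemma F0 n : F n 0. Proof. by case: (Fsub n). Qed.
Lemma Flin n c x y : F n x -> F n y -> F n (c *: x + y).
Proof. by case: (Fsub n) => _; apply. Qed.
Lemma FD n x y : F n x -> F n y -> F n (x + y).
Proof. by move=> hx hy; have := Flin 1 hx hy; rewrite scale1r. Qed.
Lemma FZ n c x : F n x -> F n (c *: x).
Proof. by move=> hx; have := Flin c hx (F0 n); rewrite addr0. Qed.
Lemma FS n x : F n x -> F (n + 1) x. Proof. by case: HF => _ H _ _; apply: H. Qed.
Lemma Fnat n (k : nat) x : F n x -> F (n + k%:Z) x.
Proof.
elim: k => [|k IH] hx; first by rewrite addr0.
by rewrite (_ : n + k.+1%:Z = (n + k%:Z) + 1); [apply: FS; exact: IH | lia].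
Qed.
Lemma Fle m n x : m <= n -> F m x -> F n x.
Proof.
move=> mn hx; rewrite (_ : n = m + (absz (n - m))%:Z); first exact: Fnat.
lia.
Qed.
Lemma Fmd d k n m a b : d = k + n - m - 1 -> F k a -> F n b -> F d (md a m b).
Proof. by move=> -> ha hb; case: HF => _ _ _; apply. Qed.
Lemma Fvac : F 0 vac. Proof. by case: HF. Qed.
Lemma Fmuln n x (j : nat) : F n x -> F n (x *+ j).
Proof. by move=> hx; rewrite -scaler_nat; exact: FZ. Qed.
Lemma Fmulz n x (j : int) : F n x -> F n (x *~ j).
Proof. by move=> hx; rewrite -scaler_int; exact: FZ. Qed.
Lemma Fsum n (r : seq nat) (f : nat -> V) : (forall i, F n (f i)) -> F n (\sum_(i <- r) f i).
Proof. by move=> hf; apply: (big_ind (F n)) => //; [exact: F0 | move=> *; exact: FD]. Qed.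

Lemma pilin n c x y : F n x -> F n y -> pi n (c *: x + y) = c *: pi n x + pi n y.
Proof. by case: HU => _ H _ _ _; apply: H. Qed.
Lemma pi0 n : pi n 0 = 0.
Proof.
apply: dbl0; have := pilin 1 (F0 n) (F0 n); rewrite !scale1r addr0; exact.
Qed.
Lemma piD n x y : F n x -> F n y -> pi n (x + y) = pi n x + pi n y.
Proof. by move=> hx hy; have := pilin 1 hx hy; rewrite !scale1r. Qed.
Lemma piZ n c x : F n x -> pi n (c *: x) = c *: pi n x.
Proof. by move=> hx; have := pilin c hx (F0 n); rewrite !addr0 pi0 addr0. Qed.
Lemma pimuln n x (j : nat) : F n x -> pi n (x *+ j) = pi n x *+ j.
Proof. by move=> hx; rewrite -!scaler_nat piZ. Qed.
Lemma pimulz n x (j : int) : F n x -> pi n (x *~ j) = pi n x *~ j.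
Proof. by move=> hx; rewrite -!scaler_int piZ. Qed.
Lemma piB n x y : F n x -> F n y -> pi n (x - y) = pi n x - pi n y.
Proof.
move=> hx hy; have := pilin (-1) hy hx; rewrite !scaleN1r => E.
by rewrite addrC E addrC.
Qed.
Lemma pisum n (r : seq nat) (f : nat -> V) : (forall i, F n (f i)) ->
  pi n (\sum_(i <- r) f i) = \sum_(i <- r) pi n (f i).
Proof.
move=> hf; elim: r => [|i r IH]; first by rewrite !big_nil pi0.
by rewrite !big_cons piD // ?IH //; exact: Fsum.
Qed.
Lemma piG n x : F n x -> G n (pi n x). Proof. by case: HU => _ _ H _ _; apply: H. Qed.
Lemma pisurj n y : G n y -> exists2 x, F n x & pi n x = y.
Proof. by case: HU => _ _ _ H _; apply: H. Qed.
Lemma piker n x : F n x -> F (n - 1) x -> pi n x = 0.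
Proof. by case: HU => _ _ _ _ H hx; move/(H n x hx). Qed.
Lemma piker' n x : F n x -> pi n x = 0 -> F (n - 1) x.
Proof. by case: HU => _ _ _ _ H hx; move/(H n x hx). Qed.

Definition lift n (y : U) : V := epsilon (inhabits 0) (fun x => F n x /\ pi n x = y).
Lemma lift_spec n y : G n y -> F n (lift n y) /\ pi n (lift n y) = y.
Proof.
move=> gy; rewrite /lift; apply: (epsilon_spec (inhabits 0) (fun x => F n x /\ pi n x = y)).
by have [x hx <-] := pisurj gy; exists x.
Qed.

Definition hm m n k (y z : U) := pi (m + n - k - 1) (md (lift m y) k (lift n z)).

Lemma hmE m n k a b : F m a -> F n b ->
  hm m n k (pi m a) (pi n b) = pi (m + n - k - 1) (md a k b).
Proof.
move=> ha hb; rewrite /hm.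
have [ha' pa] := lift_spec (piG ha); have [hb' pb] := lift_spec (piG hb).
set a' := lift m (pi m a) in ha' pa *; set b' := lift n (pi n b) in hb' pb *.
set D := m + n - k - 1.
have ea : F (m - 1) (a' - a).
  apply: (@piker' m); first by rewrite -scaleN1r addrC; exact: Flin.
  by rewrite piB // pa subrr.
have eb : F (n - 1) (b' - b).
  apply: (@piker' n); first by rewrite -scaleN1r addrC; exact: Flin.
  by rewrite piB // pb subrr.
have -> : md a' k b' = md a k b + (md (a' - a) k b' + md a k (b' - b)).
  by rewrite mdB1 mdB2 -grp4.
have hD : F D (md a k b) by exact: Fmd.
have h1 : F (D - 1) (md (a' - a) k b') by apply: Fmd (ea) hb'; rewrite /D; lia.
have h2 : F (D - 1) (md a k (b' - b)) by apply: Fmd (ha) eb; rewrite /D; lia.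
have h1' : F D (md (a' - a) k b') by apply: Fle h1; lia.
have h2' : F D (md a k (b' - b)) by apply: Fle h2; lia.
rewrite piD //; last exact: FD.
rewrite piD // !(piker h1', piker h2') //.
by rewrite !addr0.
Qed.

Lemma Gsub n : subspace (G n). Proof. by case: HU => [[H _ _]] _ _ _ _. Qed.
Lemma G0 n : G n 0. Proof. by case: (Gsub n). Qed.
Lemma Glin n c x y : G n x -> G n y -> G n (c *: x + y).
Proof. by case: (Gsub n) => _; apply. Qed.
Lemma GD n x y : G n x -> G n y -> G n (x + y).
Proof. by move=> hx hy; have := Glin 1 hx hy; rewrite scale1r. Qed.
Lemma GZ n c x : G n x -> G n (c *: x).
Proof. by move=> hx; have := Glin c hx (G0 n); rewrite addr0. Qed.
Lemma GB n x y : G n x -> G n y -> G n (x - y).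
Proof. by move=> hx hy; rewrite -scaleN1r addrC; exact: Glin. Qed.
Lemma Gdec u : exists (s : seq int) (f : int -> U),
          (forall n, G n (f n)) /\ u = \sum_(n <- s) f n.
Proof. by case: HU => [[_ H _]] _ _ _ _. Qed.
Lemma Guniq (s : seq int) (f : int -> U) : uniq s -> (forall n, G n (f n)) ->
          \sum_(n <- s) f n = 0 -> forall n, n \in s -> f n = 0.
Proof. by case: HU => [[_ _ H]] _ _ _ _; apply: H. Qed.

Lemma hm_linl m n k c y y' z : G m y -> G m y' -> G n z ->
  hm m n k (c *: y + y') z = c *: hm m n k y z + hm m n k y' z.
Proof.
move=> gy gy' gz.
have [a ha <-] := pisurj gy; have [a' ha' <-] := pisurj gy'; have [b hb <-] := pisurj gz.
rewrite -pilin // !hmE //; last exact: Flin.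
by rewrite (nva_linl HV) pilin //; apply: Fmd.
Qed.
Lemma hm_linr m n k c y z z' : G m y -> G n z -> G n z' ->
  hm m n k y (c *: z + z') = c *: hm m n k y z + hm m n k y z'.
Proof.
move=> gy gz gz'.
have [a ha <-] := pisurj gy; have [b hb <-] := pisurj gz; have [b' hb' <-] := pisurj gz'.
rewrite -pilin // !hmE //; last exact: Flin.
by rewrite (nva_linr HV) pilin //; apply: Fmd.
Qed.
Lemma hm0l m n k z : G n z -> hm m n k 0 z = 0.
Proof.
move=> gz; have [b hb <-] := pisurj gz.
by have := hmE k (F0 m) hb; rewrite pi0 md0u pi0.
Qed.
Lemma hm0r m n k y : G m y -> hm m n k y 0 = 0.
Proof.
move=> gy; have [a ha <-] := pisurj gy.
by have := hmE k ha (F0 n); rewrite pi0 mdu0 pi0.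
Qed.

Lemma Gsum n (I : Type) (r : seq I) (P : pred I) (g : I -> U) :
  (forall i, P i -> G n (g i)) -> G n (\sum_(i <- r | P i) g i).
Proof. by move=> hg; apply: (big_ind (G n)) => //; [exact: G0 | move=> *; exact: GD]. Qed.

Lemma dec_uniq u : exists (s : seq int) (f : int -> U),
  [/\ uniq s, (forall n, G n (f n)) & u = \sum_(n <- s) f n].
Proof.
have [s0 [f0 [hf0 ->]]] := Gdec u.
exists (undup s0), (fun n => \sum_(m <- s0) (if m == n then f0 m else 0)); split.
- exact: undup_uniq.
- move=> n; apply: Gsum => m _; case: eqP => [<-|_]; [exact: hf0 | exact: G0].
- rewrite exchange_big /=; apply: eq_big_seq => m ms.
  rewrite (@sum_one _ _ _ m) ?undup_uniq ?mem_undup ?eqxx //.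
  by move=> n; rewrite eq_sym => /negbTE ->.
Qed.

Definition Sd u : seq int := proj1_sig (constructive_indefinite_description _ (dec_uniq u)).
Definition fd u : int -> U := proj1_sig (constructive_indefinite_description _ (proj2_sig (constructive_indefinite_description _ (dec_uniq u)))).
Lemma fd_spec u : [/\ uniq (Sd u), (forall n, G n (fd u n)) & u = \sum_(n <- Sd u) fd u n].
Proof. by rewrite /fd /Sd; case: (constructive_indefinite_description _ (dec_uniq u)) => s /= hs; case: (constructive_indefinite_description _ hs). Qed.

Definition comp n u := if n \in Sd u then fd u n else 0.
Lemma Sd_uniq u : uniq (Sd u). Proof. by case: (fd_spec u). Qed.
Lemma compG n u : G n (comp n u).
Proof. by rewrite /comp; case: ifP => _; [case: (fd_spec u) | exact: G0]. Qed.
Lemma comp_out n u : n \notin Sd u -> comp n u = 0.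
Proof. by rewrite /comp => /negbTE ->. Qed.
Lemma comp_sum u : u = \sum_(n <- Sd u) comp n u.
Proof.
case: (fd_spec u) => _ _ {1}->; apply: eq_big_seq => n ns.
by rewrite /comp ns.
Qed.
Lemma comp_sum' u (t : seq int) : uniq t -> {subset Sd u <= t} ->
  u = \sum_(n <- t) comp n u.
Proof.
move=> ut st; rewrite (@sum_supp _ _ (Sd u)) ?Sd_uniq //; first exact: comp_sum.
by move=> n; exact: comp_out.
Qed.

Lemma comp_uniq u (s : seq int) (g : int -> U) : uniq s -> (forall n, G n (g n)) ->
  u = \sum_(n <- s) g n -> forall n, comp n u = if n \in s then g n else 0.
Proof.
move=> us hg hu n.
set t := undup (s ++ Sd u).
set h := fun n => (if n \in s then g n else 0) - comp n u.
have ht : uniq t by exact: undup_uniq.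
have hh : forall n, G n (h n).
  move=> m; apply: GB; last exact: compG.
  by case: ifP => _; [exact: hg | exact: G0].
have hs : \sum_(m <- t) h m = 0.
  rewrite /h big_split /= sumrN.
  rewrite (@sum_supp _ _ s) //; last 2 first.
  - by move=> m ms; rewrite mem_undup mem_cat ms.
  - by move=> m /negbTE ->.
  rewrite -(comp_sum' ht); last by move=> m ms; rewrite mem_undup mem_cat ms orbT.
  rewrite {1}hu; apply/eqP; rewrite subr_eq0; apply/eqP; apply: eq_big_seq => m ->; done.
case nt : (n \in t).
  have := Guniq ht hh hs nt; rewrite /h => /eqP; rewrite subr_eq0 => /eqP <-; done.
move/negbT: nt; rewrite mem_undup mem_cat negb_or => /andP[/negbTE -> /comp_out]; done.
Qed.

Lemma comp_hom m y : G m y -> forall n, comp n y = if n == m then y else 0.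
Proof.
move=> gy n; set g := fun n => if n == m then y else 0.
have hg : forall k, G k (g k).
  by move=> k; rewrite /g; case: eqP => [->|_]; [exact: gy | exact: G0].
have hs : y = \sum_(k <- [:: m]) g k by rewrite big_seq1 /g eqxx.
have E := @comp_uniq y [:: m] g erefl hg hs n.
by rewrite E inE /g; case: eqP.
Qed.

Lemma comp_lin n c u u' : comp n (c *: u + u') = c *: comp n u + comp n u'.
Proof.
set s := undup (Sd u ++ Sd u').
set g := fun m => c *: comp m u + comp m u'.
have us : uniq s by exact: undup_uniq.
have hg : forall m, G m (g m) by move=> m; apply: Glin; exact: compG.
have hs : c *: u + u' = \sum_(m <- s) g m.
  rewrite big_split /= -scaler_sumr -!comp_sum' //.
  - by move=> m ms; rewrite mem_undup mem_cat ms orbT.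
  - by move=> m ms; rewrite mem_undup mem_cat ms.
rewrite (comp_uniq us hg hs n) /g; case: ifP => // /negbT.
rewrite mem_undup mem_cat negb_or => /andP[/comp_out -> /comp_out ->].
by rewrite scaler0 addr0.
Qed.
Lemma compD n u u' : comp n (u + u') = comp n u + comp n u'.
Proof. by have := comp_lin n 1 u u'; rewrite !scale1r. Qed.

Definition mdU (u : U) (k : int) (v : U) : U :=
  \sum_(m <- Sd u) \sum_(n <- Sd v) hm m n k (comp m u) (comp n v).

Lemma mdU_ext u v k (s t : seq int) : uniq s -> uniq t ->
  {subset Sd u <= s} -> {subset Sd v <= t} ->
  mdU u k v = \sum_(m <- s) \sum_(n <- t) hm m n k (comp m u) (comp n v).
Proof.
move=> us ut su tv; rewrite /mdU (@sum_supp _ _ (Sd u) s) ?Sd_uniq //; last first.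
  move=> m /comp_out ->; apply: big1 => n _; apply: hm0l; exact: compG.
apply: eq_bigr => m _; rewrite (@sum_supp _ _ (Sd v) t) ?Sd_uniq //.
move=> n /comp_out ->; apply: hm0r; exact: compG.
Qed.

Lemma mdU_homE m n k d a b : F m a -> F n b -> d = m + n - k - 1 ->
  mdU (pi m a) k (pi n b) = pi d (md a k b).
Proof.
move=> ha hb ->.
set s := undup (m :: Sd (pi m a)); set t := undup (n :: Sd (pi n b)).
rewrite (@mdU_ext _ _ _ s t) ?undup_uniq //; first last.
- by move=> x xs; rewrite mem_undup inE xs orbT.
- by move=> x xs; rewrite mem_undup inE xs orbT.
rewrite (@sum_one _ _ _ m) ?undup_uniq ?mem_undup ?inE ?eqxx //; last first.
  move=> x /negbTE xm; apply: big1 => y _; rewrite (comp_hom (piG ha)) xm.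
  apply: hm0l; exact: compG.
rewrite (@sum_one _ _ _ n) ?undup_uniq ?mem_undup ?inE ?eqxx //; last first.
  move=> y /negbTE yn; rewrite (comp_hom (piG hb)) yn.
  apply: hm0r; exact: compG.
by rewrite (comp_hom (piG ha)) (comp_hom (piG hb)) !eqxx hmE.
Qed.

Lemma mdU_linl c u u' k v : mdU (c *: u + u') k v = c *: mdU u k v + mdU u' k v.
Proof.
set s := undup (Sd u ++ Sd u' ++ Sd (c *: u + u')).
have us : uniq s by exact: undup_uniq.
have s1 : {subset Sd u <= s} by move=> x xs; rewrite mem_undup !mem_cat xs.
have s2 : {subset Sd u' <= s} by move=> x xs; rewrite mem_undup !mem_cat xs orbT.
have s3 : {subset Sd (c *: u + u') <= s}.
  by move=> x xs; rewrite mem_undup !mem_cat xs !orbT.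
rewrite !(@mdU_ext _ _ _ s (Sd v)) ?Sd_uniq //.
rewrite scaler_sumr -big_split /=; apply: eq_bigr => m _.
rewrite scaler_sumr -big_split /=; apply: eq_bigr => n _.
by rewrite comp_lin hm_linl //; exact: compG.
Qed.

Lemma mdU_linr c u k v v' : mdU u k (c *: v + v') = c *: mdU u k v + mdU u k v'.
Proof.
set t := undup (Sd v ++ Sd v' ++ Sd (c *: v + v')).
have ut : uniq t by exact: undup_uniq.
have s1 : {subset Sd v <= t} by move=> x xs; rewrite mem_undup !mem_cat xs.
have s2 : {subset Sd v' <= t} by move=> x xs; rewrite mem_undup !mem_cat xs orbT.
have s3 : {subset Sd (c *: v + v') <= t}.
  by move=> x xs; rewrite mem_undup !mem_cat xs !orbT.
rewrite !(@mdU_ext _ _ _ (Sd u) t) ?Sd_uniq //.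
rewrite scaler_sumr -big_split /=; apply: eq_bigr => m _.
rewrite scaler_sumr -big_split /=; apply: eq_bigr => n _.
by rewrite comp_lin hm_linr //; exact: compG.
Qed.

Lemma mdUD1 u u' n v : mdU (u + u') n v = mdU u n v + mdU u' n v.
Proof. by have := mdU_linl 1 u u' n v; rewrite !scale1r. Qed.
Lemma mdUD2 u n v v' : mdU u n (v + v') = mdU u n v + mdU u n v'.
Proof. by have := mdU_linr 1 u n v v'; rewrite !scale1r. Qed.
Lemma mdU0u v n : mdU 0 n v = 0.
Proof. by apply: dbl0; rewrite -mdUD1 addr0. Qed.
Lemma mdUu0 u n : mdU u n 0 = 0.
Proof. by apply: dbl0; rewrite -mdUD2 addr0. Qed.

Lemma U_ind (P : U -> Prop) : P 0 -> (forall x y, P x -> P y -> P (x + y)) ->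
  (forall m a, F m a -> P (pi m a)) -> forall u, P u.
Proof.
move=> P0 PD Ph u; rewrite (comp_sum u); apply: (big_ind P) => // n _.
by have [a ha <-] := pisurj (compG n u); exact: Ph.
Qed.

Definition vacU := pi 0 vac.

Lemma mdU_tr u v : exists N : int, forall n, N <= n -> mdU u n v = 0.
Proof.
move: v; elim/U_ind: u.
- by move=> v; exists 0 => n _; rewrite mdU0u.
- move=> x y Hx Hy v; have [N1 h1] := Hx v; have [N2 h2] := Hy v.
  exists ((absz N1 + absz N2)%N%:Z) => n hn; rewrite mdUD1 h1 ?h2 ?addr0 //; lia.
move=> m a ha; elim/U_ind.
- by exists 0 => n _; rewrite mdUu0.
- move=> x y [N1 h1] [N2 h2].
  exists ((absz N1 + absz N2)%N%:Z) => n hn; rewrite mdUD2 h1 ?h2 ?addr0 //; lia.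
move=> p b hb; have [N hN] := nva_trunc HV a b.
exists N => n hn; rewrite (mdU_homE (d := m + p - n - 1)) // hN // pi0 //.
Qed.

Lemma mdU_vac v n : mdU vacU n v = if n == -1 then v else 0.
Proof.
elim/U_ind: v.
- by rewrite mdUu0; case: ifP.
- by move=> x y hx hy; rewrite mdUD2 hx hy; case: ifP; rewrite ?addr0.
move=> m b hb; rewrite /vacU.
case: (eqVneq n (-1)) => [->|nn].
  rewrite (mdU_homE (d := m) Fvac hb); last by lia.
  by rewrite (nva_vac HV) eqxx.
by rewrite (mdU_homE (d := 0 + m - n - 1) Fvac hb) // (nva_vac HV) (negbTE nn) pi0.
Qed.

Lemma mdU_create v : (forall n : int, 0 <= n -> mdU v n vacU = 0) /\ mdU v (-1) vacU = v.
Proof.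
elim/U_ind: v.
- by split; [move=> n _|]; rewrite mdU0u.
- move=> x y [h1 e1] [h2 e2]; split; last by rewrite mdUD1 e1 e2.
  by move=> n hn; rewrite mdUD1 h1 // h2 // addr0.
move=> m a ha; have [h1 e1] := nva_create HV a; rewrite /vacU; split.
  by move=> n hn; rewrite (mdU_homE (d := m + 0 - n - 1) ha Fvac) // h1 // pi0.
by rewrite (mdU_homE (d := m) ha Fvac) ?e1 //; lia.
Qed.

Lemma mdU_graded m n k u v : G m u -> G n v -> G (m + n - k - 1) (mdU u k v).
Proof.
move=> gu gv; have [a ha <-] := pisurj gu; have [b hb <-] := pisurj gv.
rewrite (mdU_homE (d := m + n - k - 1)) //; apply: piG; exact: Fmd.
Qed.

Lemma tripL m n p a b c i1 i2 D : F m a -> F n b -> F p c ->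
  D = m + (n + p - i2 - 1) - i1 - 1 ->
  mdU (pi m a) i1 (mdU (pi n b) i2 (pi p c)) = pi D (md a i1 (md b i2 c)).
Proof.
move=> ha hb hc hD.
rewrite (mdU_homE (d := n + p - i2 - 1) hb hc) //.
by apply: mdU_homE => //; exact: Fmd.
Qed.
Lemma tripR m n p a b c i1 i2 D : F m a -> F n b -> F p c ->
  D = (m + n - i1 - 1) + p - i2 - 1 ->
  mdU (mdU (pi m a) i1 (pi n b)) i2 (pi p c) = pi D (md (md a i1 b) i2 c).
Proof.
move=> ha hb hc hD.
rewrite (mdU_homE (d := m + n - i1 - 1) ha hb) //.
by apply: mdU_homE => //; exact: Fmd.
Qed.

Lemma WAT_transfer m n p a b c l : F m a -> F n b -> F p c -> WAT md a b c l ->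
  WAT mdU (pi m a) (pi n b) (pi p c) l.
Proof.
move=> ha hb hc H; apply: (WAT_big mdUu0) => aa bb.
have [T0 cT0] := cond_exists (nva_trunc HV) b c bb.
exists T0 => T HT _.
set D := m + n + p + aa + bb - l%:Z.
have cT : condv md b c bb T by exact: cond_le cT0 HT.
have FL : forall t : nat, F D (md a (l%:Z - 1 - aa - t%:Z) (md b (t%:Z - 1 - bb) c)).
  move=> t; apply: (Fmd (n := n + p - (t%:Z - 1 - bb) - 1)) ha _; first by rewrite /D; lia.
  exact: Fmd.
have FR : forall i : nat, F D (md (md a (l%:Z - i%:Z - 1 - aa) b) (i%:Z - 1 - bb) c).
  move=> i; apply: (Fmd (k := m + n - (l%:Z - i%:Z - 1 - aa) - 1)) _ hc; first by rewrite /D; lia.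
  exact: Fmd.
transitivity (pi D (LHSd md a b c l aa bb T)).
  rewrite /LHSd pisum; last by move=> t; apply: Fmulz.
  apply: eq_bigr => t _; rewrite pimulz //; congr (_ *~ _).
  by apply: tripL => //; rewrite /D; lia.
rewrite H // /RHSd pisum; last by move=> i; apply: Fmuln.
apply: eq_bigr => i _; rewrite pimuln //; congr (_ *+ _).
by apply: esym; apply: tripR => //; rewrite /D; lia.
Qed.

Lemma Good_all u v w : Good mdU u v w.
Proof.
elim/U_ind: u v w.
- by move=> v w; apply: Good_0u; [exact: mdUu0 | exact: mdU0u].
- by move=> x y hx hy v w; apply: Good_addu; [exact: mdUD1 | exact: hx | exact: hy].
move=> m a ha v; elim/U_ind: v.
- by move=> w; apply: Good_0v; [exact: mdUu0 | exact: mdU0u].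
- move=> x y hx hy w; apply: Good_addv; [exact: mdUu0 | exact: mdUD1 | exact: mdUD2 |
    exact: mdU_tr | exact: hx | exact: hy].
move=> n b hb w; elim/U_ind: w.
- by apply: Good_0w; try exact: mdUu0; try exact: mdU0u.
- move=> x y hx hy; apply: Good_addw; [exact: mdUu0 | exact: mdUD2 |
    exact: mdU_tr | exact: hx | exact: hy].
move=> p c hc; have [l Hl] := nva_assoc HV a b c.
apply: (Good_of mdUu0 (l := l)); apply: WAT_transfer => //.
Qed.

Lemma is_nva_U : is_nva vacU mdU.
Proof.
constructor.
- exact: mdU_linl.
- exact: mdU_linr.
- exact: mdU_tr.
- exact: mdU_vac.
- exact: mdU_create.
- move=> u v w; have [l0 H] := Good_all u v w; exists l0; exact: (H l0 (leqnn _)).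
Qed.

Lemma gen_part T : generating vac md T ->
  (forall n x, F n x <-> assoc_filtration vac md T n x) ->
  (forall u, T u -> F 1 u) /\
  generating vacU mdU (fun y => exists2 u, T u & y = pi 1 u).
Proof.
move=> _ HFT.
have T1 : forall u, T u -> F 1 u.
  move=> u tu; apply/HFT => S _ HS; apply: HS; exists [:: (u, -1)]; split.
  - by move=> i; rewrite ltnS leqn0 => /eqP ->.
  - by rewrite big_seq1.
  - by [].
  - by rewrite /monomial /= (proj2 (nva_create HV u)).
split => // S [[S0 Slin] Svac Smd] ST.
have Spi : forall u, T u -> S (pi 1 u) by move=> u tu; apply: ST; exists u.
have M1 : forall s : seq (V * int), (forall i : nat, (i < size s)%N -> T (nth (0, 0) s i).1) ->
    F (- \sum_(p <- s) p.2) (monomial vac md s) /\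
    S (pi (- \sum_(p <- s) p.2) (monomial vac md s)).
  elim=> [|[u k] s IH] hs.
    by rewrite big_nil oppr0 /=; split; [exact: Fvac | exact: Svac].
  have tu : T u := hs 0%N erefl.
  have hs' : forall i : nat, (i < size s)%N -> T (nth (0, 0) s i).1.
    by move=> i hi; exact: (hs i.+1 hi).
  have [F' S'] := IH hs'.
  rewrite big_cons /=; set z := \sum_(p <- s) p.2 in F' S' *; split.
    by apply: Fmd (T1 u tu) F'; lia.
  rewrite -(mdU_homE (T1 u tu) F'); last by lia.
  by apply: Smd => //; exact: Spi.
have hom : forall n a, F n a -> S (pi n a).
  move=> n a ha; have := (HFT n a).1 ha.
  move/(_ (fun x => F n x /\ S (pi n x))) => H; apply: (proj2 (H _ _)).
    split; first by split; [exact: F0 | rewrite pi0].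
    move=> c x y [fx sx] [fy sy]; split; first exact: Flin.
    by rewrite pilin //; apply: Slin.
  move=> x [s [hs hle _ ->]]; have [fm sm] := M1 s hs.
  have dn : - \sum_(p <- s) p.2 <= n by lia.
  split; first exact: Fle fm.
  case: (eqVneq (- \sum_(p <- s) p.2) n) => [<- //|dn'].
  have f1 : F (n - 1) (monomial vac md s) by apply: Fle fm; lia.
  by rewrite piker //; exact: Fle fm.
elim/U_ind.
- exact: S0.
- by move=> x y sx sy; have := Slin 1 x y sx sy; rewrite scale1r.
exact: hom.
Qed.

Lemma main_sec : exists (vacU : U) (mdU : U -> int -> U -> U),
    [/\ is_Zgraded_nva G vacU mdU,
        vacU = pi 0 vac,
        (forall (m n k : int) (a b : V), F m a -> F n b ->
            mdU (pi m a) k (pi n b) = pi (m + n - k - 1) (md a k b)) &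
        (forall T : V -> Prop, generating vac md T ->
            (forall n x, F n x <-> assoc_filtration vac md T n x) ->
            (forall u, T u -> F 1 u) /\
            generating vacU mdU (fun y => exists2 u, T u & y = pi 1 u))].
Proof.
exists vacU, mdU; split => //.
- split.
  + exact: is_nva_U.
  + by case: HU.
  + exact: piG Fvac.
  + move=> m n k u v; exact: mdU_graded.
- by move=> m n k a b ha hb; exact: mdU_homE.
- exact: gen_part.
Qed.

End Main.

Theorem proposition2p10 (K : fieldType) (V : lmodType K) (vac : V)
    (md : V -> int -> V -> V) (F : int -> V -> Prop)
    (HV : is_nva vac md) (HF : nva_filtration vac md F)
    (U : lmodType K) (G : int -> U -> Prop) (pi : int -> V -> U)
    (HU : is_Gr_realization F G pi) :
  exists (vacU : U) (mdU : U -> int -> U -> U),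
    [/\ is_Zgraded_nva G vacU mdU,
        vacU = pi 0 vac,
        (forall (m n k : int) (a b : V), F m a -> F n b ->
            mdU (pi m a) k (pi n b) = pi (m + n - k - 1) (md a k b)) &
        (forall T : V -> Prop, generating vac md T ->
            (forall n x, F n x <-> assoc_filtration vac md T n x) ->
            (forall u, T u -> F 1 u) /\
            generating vacU mdU (fun y => exists2 u, T u & y = pi 1 u))].
Proof. exact: (main_sec HV HF HU). Qed.
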